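(* Let $H$ be a complex Hilbert space, let $P \in \mathcal{L}(H)$ be a positive operator (i.e. $\langle Px,x\rangle \ge 0$ for all $x\in H$), and let $n$ be a positive integer. Then: (i) $P$ satisfies the property $\mathcal{N}$ if and only if $P^n$ satisfies the property $\mathcal{N}$; (ii) $P$ satisfies the property $\mathcal{N}^*$ if and only if $P^n$ satisfies the property $\mathcal{N}^*$.
   Context: $\mathcal{L}(H)$ is the space of bounded linear operators on $H$. An operator $T \in \mathcal{L}(H)$ satisfies the property $\mathcal{N}$ if there exists $x_0 \in H$ with $\|x_0\|=1$ and $\|Tx_0\| = \|T\|$. With $[T] := \inf_{\|x\| = 1} \|Tx\|$, $T$ satisfies the property $\mathcal{N}^*$ if there exists $x_0 \in H$ with $\|x_0\| = 1$ and $\|Tx_0\| = [T]$. *)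

(* Defs.v *)
From HB Require Import structures.
From mathcomp Require Import all_boot all_order all_algebra.
From mathcomp Require Import complex.
From mathcomp Require Import boolp classical_sets reals.
Set Implicit Arguments. Unset Strict Implicit. Unset Printing Implicit Defensive.
Import Order.TTheory GRing.Theory Num.Theory.
Local Open Scope ring_scope.
Local Open Scope classical_set_scope.

Section Hilbert.
Variables (R : realType) (V : lmodType R[i]) (ip : V -> V -> R[i]).

Definition hnorm (x : V) : R := Num.sqrt (complex.Re (ip x x)).

Definition is_inner_product : Prop :=
  [/\ (forall a x y z, ip (a *: x + y) z = a * ip x z + ip y z),
      (forall x y, ip y x = (ip x y)^*),
      (forall x, 0 <= ip x x) &
      (forall x, ip x x = 0 -> x = 0)].

Definition cauchy_seq (u : nat -> V) : Prop :=
  forall e : R, 0 < e -> exists N, forall m k, (N <= m)%N -> (N <= k)%N ->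
    hnorm (u m - u k) < e.

Definition converges (u : nat -> V) : Prop :=
  exists l, forall e : R, 0 < e -> exists N, forall m, (N <= m)%N ->
    hnorm (u m - l) < e.

Definition is_hilbert : Prop :=
  is_inner_product /\ forall u, cauchy_seq u -> converges u.

Definition is_linear_op (T : V -> V) : Prop :=
  forall a x y, T (a *: x + y) = a *: T x + T y.

Definition is_bounded_op (T : V -> V) : Prop :=
  is_linear_op T /\ exists M : R, forall x, hnorm (T x) <= M * hnorm x.

Definition is_positive_op (T : V -> V) : Prop :=
  forall x, 0 <= ip (T x) x.

(* ||T|| = sup_{||x||=1} ||Tx||,  [T] = inf_{||x||=1} ||Tx|| *)
Definition op_norm (T : V -> V) : R :=
  sup [set hnorm (T x) | x in [set x | hnorm x = 1]].
Definition op_min (T : V -> V) : R :=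
  inf [set hnorm (T x) | x in [set x | hnorm x = 1]].

Definition property_N (T : V -> V) : Prop :=
  exists x0, hnorm x0 = 1 /\ hnorm (T x0) = op_norm T.
Definition property_Nstar (T : V -> V) : Prop :=
  exists x0, hnorm x0 = 1 /\ hnorm (T x0) = op_min T.

Definition op_pow (T : V -> V) (n : nat) : V -> V := iter n T.

End Hilbert.

(* Main.v *)
Require Import Defs.
From HB Require Import structures.
From mathcomp Require Import all_boot all_order all_algebra.
From mathcomp Require Import complex.
From mathcomp Require Import boolp classical_sets reals.
From mathcomp Require Import ring lra.
Import Order.TTheory GRing.Theory Num.Theory.
Local Open Scope ring_scope.

Section Basics.
Variables (R : realType) (V : lmodType R[i]) (ip : V -> V -> R[i]).
Hypothesis hip : is_inner_product ip.

Local Notation rC t := (real_complex R t).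
Let rip x y := complex.Re (ip x y).

Lemma ipDZl a x y z : ip (a *: x + y) z = a * ip x z + ip y z.
Proof. by case: hip. Qed.

Lemma ip0l z : ip 0 z = 0.
Proof.
have := ipDZl 1 0 0 z; rewrite scale1r addr0 mul1r => h.
by apply: (addrI (ip 0 z)); rewrite addr0 -h.
Qed.

Lemma ipDl x y z : ip (x + y) z = ip x z + ip y z.
Proof. by rewrite -[x]scale1r ipDZl mul1r scale1r. Qed.

Lemma ipZl a x z : ip (a *: x) z = a * ip x z.
Proof. by rewrite -[a *: x]addr0 ipDZl ip0l addr0. Qed.

Lemma ipNl x z : ip (- x) z = - ip x z.
Proof. by rewrite -scaleN1r ipZl mulN1r. Qed.

Lemma ipC x y : ip y x = (ip x y)^*.
Proof. by case: hip. Qed.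

Lemma ipDr x y z : ip z (x + y) = ip z x + ip z y.
Proof. by rewrite ipC ipDl rmorphD /= -!ipC. Qed.

Lemma ipZr a x z : ip z (a *: x) = a^* * ip z x.
Proof. by rewrite ipC ipZl rmorphM /= -ipC. Qed.

Lemma ip0r z : ip z 0 = 0.
Proof. by rewrite ipC ip0l conjC0. Qed.

Lemma ipNr x z : ip z (- x) = - ip z x.
Proof. by rewrite -scaleN1r ipZr rmorphN1 mulN1r. Qed.

Lemma Re_conjc (z : R[i]) : complex.Re (z^*) = complex.Re z.
Proof. by case: z. Qed.

Lemma Re_mulRC (t : R) (z : R[i]) : complex.Re ((rC t) * z) = t * complex.Re z.
Proof. by case: z => a b /=; rewrite mul0r subr0. Qed.

Lemma ripC x y : rip x y = rip y x.
Proof. by rewrite /rip [ip y x]ipC Re_conjc. Qed.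

Lemma ripDl x y z : rip (x + y) z = rip x z + rip y z.
Proof. by rewrite /rip ipDl; case: (ip x z) (ip y z) => a b [c d]. Qed.
Lemma ripDr x y z : rip z (x + y) = rip z x + rip z y.
Proof. by rewrite /rip ipDr; case: (ip z x) (ip z y) => a b [c d]. Qed.
Lemma ripNl x z : rip (- x) z = - rip x z.
Proof. by rewrite /rip ipNl; case: (ip x z). Qed.
Lemma ripNr x z : rip z (- x) = - rip z x.
Proof. by rewrite /rip ipNr; case: (ip z x). Qed.
Lemma ripZl (t : R) x z : rip ((rC t) *: x) z = t * rip x z.
Proof. by rewrite /rip ipZl Re_mulRC. Qed.
Lemma ripZr (t : R) x z : rip z ((rC t) *: x) = t * rip z x.
Proof. by rewrite ripC ripZl ripC. Qed.
Lemma rip0l z : rip 0 z = 0.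
Proof. by rewrite /rip ip0l. Qed.
Lemma rip0r z : rip z 0 = 0.
Proof. by rewrite /rip ip0r. Qed.

Lemma rip_ge0 x : 0 <= rip x x.
Proof. by case: hip => _ _ h _; have := h x; rewrite lecE => /andP[]. Qed.

Lemma ip_real x : ip x x = (rC (rip x x)).
Proof.
case: hip => _ _ h _; have := h x; rewrite lecE /rip.
case: (ip x x) => a b /= /andP[/eqP e _].
rewrite e. reflexivity.
Qed.

Lemma rip_eq0 x : rip x x = 0 -> x = 0.
Proof. by case: hip => _ _ _ h; move=> e; apply: h; rewrite ip_real e. Qed.

Lemma hnormE x : hnorm ip x = Num.sqrt (rip x x).
Proof. by []. Qed.

Lemma hnorm_ge0 x : 0 <= hnorm ip x.
Proof. exact: sqrtr_ge0. Qed.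

Lemma hnorm_sq x : hnorm ip x ^+ 2 = rip x x.
Proof. by rewrite hnormE sqr_sqrtr // rip_ge0. Qed.

Lemma hnorm_eq0 x : hnorm ip x = 0 -> x = 0.
Proof. by move=> h; apply: rip_eq0; rewrite -hnorm_sq h expr0n. Qed.

Lemma hnorm0 : hnorm ip 0 = 0.
Proof. by rewrite hnormE rip0l sqrtr0. Qed.

Lemma CS x y : rip x y ^+ 2 <= rip x x * rip y y.
Proof.
have [c0|cpos] := eqVneq (rip y y) 0.
  by rewrite (rip_eq0 y c0) rip0r rip0l expr0n /= mulr0.
set a := rip x x; set b := rip x y; set c := rip y y.
have := rip_ge0 ((rC c) *: x - (rC b) *: y).
rewrite !(ripDl, ripDr, ripNl, ripNr, ripZl, ripZr) -/a -/b -/c.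
rewrite (ripC y x) -/b.
have e : c * (c * a - b * b) + (c * - (b * b) - b * - (b * c)) = c * (a * c - b ^+ 2) by ring.
rewrite e.
have cg : 0 < c by rewrite lt0r cpos rip_ge0.
by rewrite pmulr_rge0 // subr_ge0.
Qed.

Lemma CSn x y : `|rip x y| <= hnorm ip x * hnorm ip y.
Proof.
rewrite !hnormE -sqrtrM ?rip_ge0 // -sqrtr_sqr.
by apply: ler_wsqrtr; apply: CS.
Qed.

Lemma rip_expand x y : rip (x + y) (x + y) = rip x x + 2 * rip x y + rip y y.
Proof. rewrite !(ripDl, ripDr) (ripC y x); ring. Qed.

Lemma hnormD x y : hnorm ip (x + y) <= hnorm ip x + hnorm ip y.
Proof.
have h0 : 0 <= hnorm ip x + hnorm ip y by rewrite addr_ge0 ?hnorm_ge0.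
rewrite [hnorm ip (x + y)]hnormE -(ger0_norm h0) -sqrtr_sqr.
apply: ler_wsqrtr; rewrite rip_expand sqrrD !hnorm_sq.
rewrite lerD2r lerD2l -mulr_natl.
have := ler_norm (rip x y); have := CSn x y; lra.
Qed.

Lemma hnormZ (t : R) x : hnorm ip ((rC t) *: x) = `|t| * hnorm ip x.
Proof.
by rewrite !hnormE ripZl ripZr mulrA -expr2 sqrtrM ?sqr_ge0 // sqrtr_sqr.
Qed.

Lemma hnormN x : hnorm ip (- x) = hnorm ip x.
Proof. by rewrite hnormE ripNl ripNr opprK. Qed.


Section Lin.
Variable T : V -> V.
Hypothesis hT : is_linear_op T.
Lemma lin0 : T 0 = 0.
Proof.
have := hT 1 0 0; rewrite scale1r addr0 scale1r => h.
by apply: (addrI (T 0)); rewrite addr0 -h.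
Qed.
Lemma linD x y : T (x + y) = T x + T y.
Proof. by have := hT 1 x y; rewrite !scale1r. Qed.
Lemma linZ a x : T (a *: x) = a *: T x.
Proof. by rewrite -[a *: x]addr0 hT lin0 addr0. Qed.
Lemma linN x : T (- x) = - T x.
Proof. by rewrite -scaleN1r linZ scaleN1r. Qed.
Lemma linB x y : T (x - y) = T x - T y.
Proof. by rewrite linD linN. Qed.
End Lin.

Lemma iter_lin (T : V -> V) k : is_linear_op T -> is_linear_op (iter k T).
Proof.
move=> hT; elim: k => [|k IH]; rewrite /is_linear_op //= => a x y.
by rewrite IH hT.
Qed.

Variable P : V -> V.
Hypothesis hPl : is_linear_op P.
Hypothesis hPpos : is_positive_op ip P.

Lemma Psym x y : ip (P y) x = ip y (P x).
Proof.
have r z : (ip (P z) z)^* = ip (P z) z := geC0_conj (hPpos z).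
set bxy := ip (P x) y; set byx := ip (P y) x.
have e1 : bxy + byx = ip (P (x + y)) (x + y) - ip (P x) x - ip (P y) y.
  rewrite (@linD P hPl) !(ipDl, ipDr) -/bxy -/byx; ring.
have e2 : - 'i * bxy + 'i * byx =
    ip (P (x + 'i *: y)) (x + 'i *: y) - ip (P x) x - ip (P y) y.
  rewrite (@linD P hPl) (@linZ P hPl) !(ipDl, ipDr, ipZl, ipZr) -/bxy -/byx conjCi.
  have ii : 'i * - 'i = 1 :> R[i] by rewrite mulrN -expr2 sqrCi opprK.
  rewrite mulrA ii mul1r; ring.
have c1 : bxy^* + byx^* = bxy + byx.
  by rewrite -rmorphD /= e1 !rmorphB /= !r.
have c2 : 'i * bxy^* - 'i * byx^* = - 'i * bxy + 'i * byx.
  have c2' : (- 'i * bxy + 'i * byx)^* = - 'i * bxy + 'i * byx.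
    by rewrite e2 !rmorphB /= !r.
  rewrite -c2' rmorphD /= !rmorphM /= rmorphN /= conjCi; ring.
rewrite ipC -/bxy.
set u := bxy^*; set v := byx^*.
have E : 2 * (u - byx) = (u + v - (bxy + byx))
   - 'i * ('i * u - 'i * v - (- 'i * bxy + 'i * byx))
   + (1 + 'i ^+ 2) * (u - v + bxy - byx) by ring.
move: E; rewrite c1 c2 sqrCi !subrr mulr0 subr0 mul0r addr0.
move/eqP; rewrite mulf_eq0 pnatr_eq0 /= subr_eq0 => /eqP h.
by rewrite h.
Qed.


Lemma ripPsym u v : rip (P u) v = rip u (P v).
Proof. by rewrite /rip Psym. Qed.

Lemma ripIsym k u v : rip (iter k P u) v = rip u (iter k P v).
Proof.
elim: k u v => [|k IH] u v //=.
by rewrite ripPsym IH -iterSr.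
Qed.

Lemma Pker z : P (P z) = 0 -> P z = 0.
Proof.
move=> h; apply: rip_eq0; rewrite -ripPsym h; exact: rip0l.
Qed.

Lemma iter_ker k z : iter k.+1 P z = 0 -> P z = 0.
Proof.
elim: k z => [|k IH] z //= h.
apply: Pker; apply: IH; by rewrite -iterSr.
Qed.

Lemma VL (A : V -> V) (hA : is_linear_op A)
  (symA : forall u v, rip (A u) v = rip u (A v)) (B : R) (hB : 0 < B)
  (Qpos : forall z, 0 <= rip (A z) z) (Qub : forall z, rip (A z) z <= B * rip z z) y :
  rip (A y) (A y) <= B * rip (A y) y.
Proof.
set w := A y; set t := B^-1.
have := Qpos (y - (rC t) *: w).
rewrite (@linB A hA) (@linZ A hA) !(ripDl, ripDr, ripNl, ripNr, ripZl, ripZr).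
have e1 : rip (A w) y = rip w w by rewrite symA.
rewrite e1 -/w.
have X := Qub w.
have tB : t * B = 1 by rewrite mulVf // gt_eqF.
have tp : 0 < t by rewrite invr_gt0.
have W0 := rip_ge0 w.
set Q := rip w y; set W := rip w w; set Y := rip (A w) w.
move=> h.
have h1 : t * t * Y <= t * W.
  rewrite -mulrA; apply: ler_wpM2l; first exact: ltW.
  apply: le_trans (ler_wpM2l (ltW tp) X) _; by rewrite mulrA tB mul1r.
have h2 : t * W <= Q by nra.
have := ler_wpM2l (ltW hB) h2; by rewrite mulrA (mulrC B) tB mul1r.
Qed.


Hypothesis hPbnd : exists Mb : R, forall x, hnorm ip (P x) <= Mb * hnorm ip x.

Lemma Pbnd0 : exists M0, 0 <= M0 /\ forall x, hnorm ip (P x) <= M0 * hnorm ip x.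
Proof.
case: hPbnd => Mb h; exists `|Mb|; split => // x.
apply: le_trans (h x) _; apply: ler_wpM2r; [exact: hnorm_ge0 | exact: ler_norm].
Qed.

Lemma Pbnd2 : exists K, 0 <= K /\ forall x, rip (P x) (P x) <= K * rip x x.
Proof.
case: Pbnd0 => M0 [M0p h]; exists (M0 ^+ 2); split; first exact: sqr_ge0.
move=> x; rewrite -!hnorm_sq.
have h1 := h x; have h2 := hnorm_ge0 (P x); have h3 := hnorm_ge0 x.
nra.
Qed.

Lemma lin_comp (T1 T2 : V -> V) : is_linear_op T1 -> is_linear_op T2 ->
  is_linear_op (fun z => T1 (T2 z)).
Proof. by move=> h1 h2 a x y; rewrite h2 h1. Qed.

Lemma lin_sub_scal (T1 : V -> V) (a : R[i]) : is_linear_op T1 ->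
  is_linear_op (fun z => T1 z - a *: z).
Proof.
move=> h1 b x y; rewrite h1 scalerDr scalerBr !scalerA mulrC.
rewrite opprD addrACA; congr (_ + _); by rewrite scalerBr.
Qed.

Lemma lin_scal (T1 : V -> V) (a : R[i]) : is_linear_op T1 ->
  is_linear_op (fun z => a *: T1 z).
Proof.
by move=> h1 b x y; rewrite h1 scalerDr !scalerA mulrC.
Qed.

Lemma EigB (s c : R) (hs : s ^+ 2 = 1)
  (hQ : forall z, 0 <= s * (rip (P z) (P z) - c ^+ 2 * rip z z)) :
  exists B, 0 < B /\ forall y,
    rip (P (P y) - rC (c ^+ 2) *: y) (P (P y) - rC (c ^+ 2) *: y)
      <= B * (s * (rip (P y) (P y) - c ^+ 2 * rip y y)).
Proof.
case: Pbnd2 => K [K0 hK].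
have s1 : s = 1 \/ s = -1.
  have : (s - 1) * (s + 1) = s ^+ 2 - 1 by ring.
  rewrite hs subrr => /eqP; rewrite mulf_eq0 subr_eq0 addr_eq0 => /orP[/eqP -> | /eqP ->]; by [left|right].
pose A := fun z => rC s *: (P (P z) - rC (c ^+ 2) *: z).
have hA : is_linear_op A.
  apply: lin_scal; apply: lin_sub_scal; exact: lin_comp.
have RA u v : rip (A u) v = s * (rip (P u) (P v) - c ^+ 2 * rip u v).
  by rewrite /A ripZl ripDl ripNl ripZl ripPsym.
have RA' u v : rip u (A v) = s * (rip (P u) (P v) - c ^+ 2 * rip u v).
  by rewrite /A ripZr ripDr ripNr ripZr -ripPsym.
have symA u v : rip (A u) v = rip u (A v) by rewrite RA RA'.
exists (K + c ^+ 2 + 1); split.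
  by apply: ltr_wpDl => //; apply: addr_ge0 => //; exact: sqr_ge0.
have Bp : 0 < K + c ^+ 2 + 1.
  by apply: ltr_wpDl => //; apply: addr_ge0 => //; exact: sqr_ge0.
have Qp : forall z, 0 <= rip (A z) z by move=> z; rewrite RA.
have Qu : forall z, rip (A z) z <= (K + c ^+ 2 + 1) * rip z z.
  move=> z; rewrite RA.
  have := hK z; have := rip_ge0 z; have := rip_ge0 (P z); have := sqr_ge0 c.
  by case: s1 => ->; nra.
move=> y.
have h := @VL A hA symA (K + c ^+ 2 + 1) Bp Qp Qu y.
have e1 : rip (A y) (A y) = rip (P (P y) - rC (c ^+ 2) *: y) (P (P y) - rC (c ^+ 2) *: y).
  by rewrite /A ripZl ripZr mulrA -expr2 hs mul1r.
by rewrite e1 RA in h.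
Qed.


Lemma ERR (c : R) j : exists C, 0 <= C /\ forall y,
  hnorm ip (iter j.*2 P y - rC ((c ^+ 2) ^+ j) *: y)
    <= C * hnorm ip (P (P y) - rC (c ^+ 2) *: y).
Proof.
elim: j => [|j [C [C0 hC]]].
  exists 0; split => // y.
  by rewrite expr0 rmorph1 scale1r /= subrr hnorm0 mul0r.
case: Pbnd0 => M0 [M0p hM].
have cj0 : 0 <= (c ^+ 2) ^+ j by apply: exprn_ge0; exact: sqr_ge0.
exists (M0 ^+ 2 * C + (c ^+ 2) ^+ j); split.
  by apply: addr_ge0 => //; apply: mulr_ge0 => //; exact: sqr_ge0.
move=> y; rewrite doubleS /=.
set u := iter j.*2 P y - rC ((c ^+ 2) ^+ j) *: y.
set e := P (P y) - rC (c ^+ 2) *: y.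
have eq : P (P (iter j.*2 P y)) - rC ((c ^+ 2) ^+ j.+1) *: y
    = P (P u) + rC ((c ^+ 2) ^+ j) *: e.
  rewrite /u /e !(@linB P hPl) !(@linZ P hPl) scalerBr scalerA -rmorphM -exprSr.
  by rewrite addrA subrK.
rewrite eq; apply: le_trans (hnormD _ _) _.
rewrite hnormZ ger0_norm //.
have h1 : hnorm ip (P (P u)) <= M0 ^+ 2 * (C * hnorm ip e).
  apply: le_trans (hM _) _.
  apply: le_trans (ler_wpM2l M0p (hM u)) _.
  rewrite [M0 * (M0 * _)]mulrA -expr2; apply: ler_wpM2l; first exact: sqr_ge0.
  exact: hC.
rewrite mulrDl -mulrA; exact: lerD.
Qed.

Lemma KEY (s c : R) n (hs : s ^+ 2 = 1)
  (hQ : forall z, 0 <= s * (rip (P z) (P z) - c ^+ 2 * rip z z)) :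
  exists K, 0 < K /\ forall y, rip y y = 1 ->
    (rip (iter n P y) (iter n P y) - (c ^+ 2) ^+ n) ^+ 2
      <= K * (s * (rip (P y) (P y) - c ^+ 2)).
Proof.
case: (@EigB s c hs hQ) => B [B0 hB].
case: (ERR c n) => C [C0 hC].
exists (C ^+ 2 * B + 1); split.
  by apply: ltr_wpDl => //; apply: mulr_ge0 => //; [exact: sqr_ge0 | exact: ltW].
move=> y y1.
set E := iter n.*2 P y - rC ((c ^+ 2) ^+ n) *: y.
set e := P (P y) - rC (c ^+ 2) *: y.
have r1 : rip (iter n P y) (iter n P y) - (c ^+ 2) ^+ n = rip E y.
  rewrite ripIsym -iterD addnn /E ripDl ripNl ripZl y1 mulr1.
  by rewrite ripC.
rewrite r1.
have hy : hnorm ip y = 1 by rewrite hnormE y1 sqrtr1.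
have d1 : `|rip E y| <= C * hnorm ip e.
  apply: le_trans (CSn E y) _; rewrite hy mulr1; exact: hC.
have he0 := hnorm_ge0 e.
have d2 : hnorm ip e ^+ 2 <= B * (s * (rip (P y) (P y) - c ^+ 2)).
  by rewrite hnorm_sq; have := hB y; rewrite y1 mulr1.
have D0 : 0 <= s * (rip (P y) (P y) - c ^+ 2) by have := hQ y; rewrite y1 mulr1.
have d3 : rip E y ^+ 2 <= (C * hnorm ip e) ^+ 2.
  rewrite -real_normK ?num_real //.
  by apply: lerXn2r; rewrite ?nnegrE ?normr_ge0 ?mulr_ge0.
apply: le_trans d3 _.
rewrite exprMn mulrDl mul1r -mulrA.
apply: le_trans (ler_wpM2l (sqr_ge0 C) d2) _.
by rewrite lerDl.
Qed.


Section Ops.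
Variable T : V -> V.
Hypothesis hT : is_linear_op T.
Hypothesis hTb : exists Mb : R, forall x, hnorm ip (T x) <= Mb * hnorm ip x.
Variable x0 : V.
Hypothesis hx0 : hnorm ip x0 = 1.

Let S := [set hnorm ip (T x) | x in [set x | hnorm ip x = 1]]%classic.

Lemma S_ne : (S !=set0)%classic.
Proof. by exists (hnorm ip (T x0)); exists x0. Qed.

Lemma S_sup : has_sup S.
Proof.
split; first exact: S_ne.
case: hTb => Mb h; exists Mb => _ [x /= hx <-].
by have := h x; rewrite hx mulr1.
Qed.

Lemma S_inf : has_lbound S.
Proof. by exists 0 => _ [x _ <-]; exact: hnorm_ge0. Qed.

Lemma normalize z : z <> 0 ->
  exists2 u, hnorm ip u = 1 & z = rC (hnorm ip z) *: u.
Proof.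
move=> z0.
have hz : hnorm ip z != 0 by apply/eqP => /hnorm_eq0.
have hz0 : 0 < hnorm ip z by rewrite lt0r hz hnorm_ge0.
exists (rC (hnorm ip z)^-1 *: z).
  by rewrite hnormZ ger0_norm ?invr_ge0 ?hnorm_ge0 // mulVf.
by rewrite scalerA -rmorphM mulfV // rmorph1 scale1r.
Qed.

Lemma opn_ub z : hnorm ip (T z) <= op_norm ip T * hnorm ip z.
Proof.
have [->|z0] := eqVneq z 0.
  by rewrite (@lin0 T hT) hnorm0 mulr0.
have nz : z <> 0 by apply/eqP.
case: (normalize z nz) => u hu ->.
rewrite (@linZ T hT) !hnormZ hu mulr1 mulrC; apply: ler_wpM2r; first exact: normr_ge0.
by apply: sup_upper_bound; [exact: S_sup | exists u].
Qed.

Lemma opn_le b : (forall u, hnorm ip u = 1 -> hnorm ip (T u) <= b) ->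
  op_norm ip T <= b.
Proof. by move=> h; apply: ge_sup; [exact: S_ne | move=> _ [u hu <-]; exact: h]. Qed.

Lemma opm_ge b : (forall u, hnorm ip u = 1 -> b <= hnorm ip (T u)) ->
  b <= op_min ip T.
Proof. by move=> h; apply: lb_le_inf; [exact: S_ne | move=> _ [u hu <-]; exact: h]. Qed.

Lemma opm_ge0 : 0 <= op_min ip T.
Proof. by apply: opm_ge => u _; exact: hnorm_ge0. Qed.

Lemma opn_ge0 : 0 <= op_norm ip T.
Proof.
by apply: le_trans (hnorm_ge0 (T x0)) _; have := opn_ub x0; rewrite hx0 mulr1.
Qed.

Lemma opm_lb z : op_min ip T * hnorm ip z <= hnorm ip (T z).
Proof.
have [->|z0] := eqVneq z 0.
  by rewrite (@lin0 T hT) hnorm0 mulr0.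
have nz : z <> 0 by apply/eqP.
case: (normalize z nz) => u hu ->.
rewrite (@linZ T hT) !hnormZ hu mulr1 mulrC; apply: ler_wpM2l; first exact: normr_ge0.
by apply: ge_inf; [exact: S_inf | exists u].
Qed.
End Ops.


Lemma iterP_lin k : is_linear_op (iter k P).
Proof. exact: iter_lin. Qed.

Lemma iter_ub (M : R) (hM : forall z, hnorm ip (P z) <= M * hnorm ip z) (M0 : 0 <= M) k z :
  hnorm ip (iter k P z) <= M ^+ k * hnorm ip z.
Proof.
elim: k => [|k IH] /=; first by rewrite expr0 mul1r.
apply: le_trans (hM _) _; rewrite exprS -mulrA; exact: ler_wpM2l.
Qed.

Lemma iter_lb (m : R) (hm : forall z, m * hnorm ip z <= hnorm ip (P z)) (m0 : 0 <= m) k z :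
  m ^+ k * hnorm ip z <= hnorm ip (iter k P z).
Proof.
elim: k => [|k IH] /=; first by rewrite expr0 mul1r.
apply: le_trans _ (hm _); rewrite exprS -mulrA; exact: ler_wpM2l.
Qed.

Lemma iterP_bnd k : exists Mb : R, forall x, hnorm ip (iter k P x) <= Mb * hnorm ip x.
Proof.
case: Pbnd0 => M0 [M0p hM]; exists (M0 ^+ k) => x; exact: iter_ub.
Qed.

Lemma sq_eq0_le {a K : R} : 0 < K -> a ^+ 2 <= K * 0 -> a = 0.
Proof.
move=> K0; rewrite mulr0 => h; apply/eqP; rewrite -sqrf_eq0 eq_le h sqr_ge0 //.
Qed.

Lemma hnorm_from_rip {z} {c : R} : 0 <= c -> rip z z = c ^+ 2 -> hnorm ip z = c.
Proof. by move=> c0 e; rewrite hnormE e sqrtr_sqr ger0_norm. Qed.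


Section Dirs.
Variable n : nat.
Variable x0 : V.
Hypothesis hx0 : hnorm ip x0 = 1.

Let M := op_norm ip P.
Let m := op_min ip P.

Lemma rx0 : rip x0 x0 = 1.
Proof. by rewrite -hnorm_sq hx0 expr1n. Qed.

Lemma M0 : 0 <= M.
Proof. exact: (@opn_ge0 P hPl hPbnd x0 hx0). Qed.
Lemma m0 : 0 <= m.
Proof. exact: (@opm_ge0 P x0 hx0). Qed.
Lemma hMz z : hnorm ip (P z) <= M * hnorm ip z.
Proof. exact: (@opn_ub P hPl hPbnd x0 hx0 z). Qed.
Lemma hmz z : m * hnorm ip z <= hnorm ip (P z).
Proof. exact: (@opm_lb P hPl z). Qed.

Lemma sq_le {a b : R} : 0 <= a -> a <= b -> a ^+ 2 <= b ^+ 2.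
Proof. move=> a0 ab; rewrite !expr2; apply: ler_pM => //. Qed.

Lemma hQsup z : 0 <= -1 * (rip (P z) (P z) - M ^+ 2 * rip z z).
Proof.
rewrite -!hnorm_sq -exprMn mulN1r oppr_ge0 subr_le0.
apply: sq_le; [exact: hnorm_ge0 | exact: hMz].
Qed.

Lemma hQinf z : 0 <= 1 * (rip (P z) (P z) - m ^+ 2 * rip z z).
Proof.
rewrite -!hnorm_sq -exprMn mul1r subr_ge0.
apply: sq_le; [apply: mulr_ge0; [exact: m0 | exact: hnorm_ge0] | exact: hmz].
Qed.

Lemma dirA : hnorm ip (P x0) = M -> hnorm ip (iter n P x0) = op_norm ip (iter n P).
Proof.
move=> h.
have s1 : (-1 : R) ^+ 2 = 1 by rewrite sqrrN expr1n.
case: (@KEY (-1) M n s1 hQsup) => K [K0 hK].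
have := hK x0 rx0; rewrite -[rip (P x0) (P x0)]hnorm_sq h subrr mulr0.
move/(sq_eq0_le K0)/eqP; rewrite subr_eq0 => /eqP e.
have hn : hnorm ip (iter n P x0) = M ^+ n.
  by apply: hnorm_from_rip; [exact: exprn_ge0 M0 | rewrite e exprAC].
rewrite hn; apply/eqP; rewrite eq_le; apply/andP; split.
  by rewrite -hn; have := @opn_ub (iter n P) (iterP_lin n) (iterP_bnd n) x0 hx0 x0; rewrite hx0 mulr1.
apply: (@opn_le (iter n P) x0 hx0) => u hu.
by have := @iter_ub M hMz M0 n u; rewrite hu mulr1.
Qed.

Lemma hnorm1_rip y : hnorm ip y = 1 -> rip y y = 1.
Proof. by move=> h; rewrite -hnorm_sq h expr1n. Qed.

Lemma rip_hnorm_sqrt y : hnorm ip y = Num.sqrt (rip y y).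
Proof. by []. Qed.

Lemma dirC : hnorm ip (P x0) = m -> hnorm ip (iter n P x0) = op_min ip (iter n P).
Proof.
move=> h.
have s1 : (1 : R) ^+ 2 = 1 by rewrite expr1n.
case: (@KEY 1 m n s1 hQinf) => K [K0 hK].
have := hK x0 rx0; rewrite -[rip (P x0) (P x0)]hnorm_sq h subrr mulr0.
move/(sq_eq0_le K0)/eqP; rewrite subr_eq0 => /eqP e.
have hn : hnorm ip (iter n P x0) = m ^+ n.
  by apply: hnorm_from_rip; [exact: exprn_ge0 m0 | rewrite e exprAC].
rewrite hn; apply/eqP; rewrite eq_le; apply/andP; split.
  apply: (@opm_ge (iter n P) x0 hx0) => u hu.
  by have := @iter_lb m hmz m0 n u; rewrite hu mulr1.
by rewrite -hn; have := @opm_lb (iter n P) (iterP_lin n) x0; rewrite hx0 mulr1.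
Qed.

Lemma dirB : (0 < n)%N -> hnorm ip (iter n P x0) = op_norm ip (iter n P) ->
  hnorm ip (P x0) = M.
Proof.
move=> n0 h.
set Kn := op_norm ip (iter n P).
have Kn0 : 0 <= Kn := @opn_ge0 (iter n P) (iterP_lin n) (iterP_bnd n) x0 hx0.
have MKn : M ^+ n <= Kn.
  rewrite leNgt; apply/negP => lt.
  have s1 : (-1 : R) ^+ 2 = 1 by rewrite sqrrN expr1n.
  case: (@KEY (-1) M n s1 hQsup) => K [K0 hK].
  set g := (M ^+ 2) ^+ n - Kn ^+ 2.
  have g0 : 0 < g.
    rewrite /g exprAC subr_gt0 !expr2; apply: ltr_pM => //.
  have bnd y : hnorm ip y = 1 -> rip (P y) (P y) <= M ^+ 2 - g ^+ 2 / K.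
    move=> hy; have ry := hnorm1_rip y hy.
    have := hK y ry.
    have hPn : rip (iter n P y) (iter n P y) <= Kn ^+ 2.
      rewrite -hnorm_sq; apply: sq_le; first exact: hnorm_ge0.
      by have := @opn_ub (iter n P) (iterP_lin n) (iterP_bnd n) x0 hx0 y; rewrite hy mulr1.
    set d := rip (iter n P y) (iter n P y) - (M ^+ 2) ^+ n.
    have dg : g <= - d by move: hPn; rewrite /d /g; lra.
    have d2 : g ^+ 2 <= d ^+ 2 by rewrite -[d ^+ 2]sqrrN; exact: sq_le (ltW g0) dg.
    move=> hd.
    have : g ^+ 2 / K <= M ^+ 2 - rip (P y) (P y).
      rewrite ler_pdivrMr // mulrC; apply: le_trans d2 _; apply: le_trans hd _.
      by rewrite mulN1r opprB.
    lra.
  have bpos : 0 <= M ^+ 2 - g ^+ 2 / K.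
    by apply: le_trans (bnd x0 hx0); exact: rip_ge0.
  have Mb : M <= Num.sqrt (M ^+ 2 - g ^+ 2 / K).
    apply: (@opn_le P x0 hx0) => u hu.
    by rewrite rip_hnorm_sqrt; apply: ler_wsqrtr; exact: bnd.
  have := sq_le M0 Mb; rewrite sqr_sqrtr //.
  have : 0 < g ^+ 2 / K by apply: divr_gt0 => //; exact: exprn_gt0.
  lra.
set n' := n.-1.
have en : n = n'.+1 by rewrite /n' prednK.
have h1 : hnorm ip (iter n P x0) <= M ^+ n' * hnorm ip (P x0).
  by rewrite en iterSr; exact: (@iter_ub M hMz M0 n').
have h2 : hnorm ip (P x0) <= M by have := hMz x0; rewrite hx0 mulr1.
apply/eqP; rewrite eq_le h2 /=.
have [->|Mp] := eqVneq M 0; first exact: hnorm_ge0.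
have Mpos : 0 < M by rewrite lt0r Mp M0.
rewrite -(ler_pM2l (exprn_gt0 n' Mpos)) -exprSr -en.
apply: le_trans MKn _; by rewrite /Kn -h.
Qed.

Lemma dirD : (0 < n)%N -> hnorm ip (iter n P x0) = op_min ip (iter n P) ->
  hnorm ip (P x0) = m.
Proof.
move=> n0 h.
set kn := op_min ip (iter n P).
have mkn : kn <= m ^+ n.
  rewrite leNgt; apply/negP => lt.
  have s1 : (1 : R) ^+ 2 = 1 by rewrite expr1n.
  case: (@KEY 1 m n s1 hQinf) => K [K0 hK].
  have mn0 : 0 <= m ^+ n := exprn_ge0 n m0.
  have kn0 : 0 <= kn by apply: le_trans mn0 (ltW lt).
  set g := kn ^+ 2 - (m ^+ 2) ^+ n.
  have g0 : 0 < g.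
    rewrite /g exprAC subr_gt0 !expr2; apply: ltr_pM => //.
  have bnd y : hnorm ip y = 1 -> m ^+ 2 + g ^+ 2 / K <= rip (P y) (P y).
    move=> hy; have ry := hnorm1_rip y hy.
    have := hK y ry.
    have hPn : kn ^+ 2 <= rip (iter n P y) (iter n P y).
      rewrite -hnorm_sq; apply: sq_le => //.
      by have := @opm_lb (iter n P) (iterP_lin n) y; rewrite hy mulr1.
    set d := rip (iter n P y) (iter n P y) - (m ^+ 2) ^+ n.
    have dg : g <= d by move: hPn; rewrite /d /g; lra.
    have d2 : g ^+ 2 <= d ^+ 2 by exact: sq_le (ltW g0) dg.
    move=> hd.
    have : g ^+ 2 / K <= rip (P y) (P y) - m ^+ 2.
      rewrite ler_pdivrMr // mulrC; apply: le_trans d2 _; apply: le_trans hd _.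
      by rewrite mul1r.
    lra.
  have mb : Num.sqrt (m ^+ 2 + g ^+ 2 / K) <= m.
    apply: (@opm_ge P x0 hx0) => u hu.
    by rewrite rip_hnorm_sqrt; apply: ler_wsqrtr; exact: bnd.
  have gk : 0 < g ^+ 2 / K by apply: divr_gt0 => //; exact: exprn_gt0.
  have := sq_le (sqrtr_ge0 _) mb; rewrite sqr_sqrtr; last first.
    by apply: addr_ge0; [exact: sqr_ge0 | exact: ltW].
  lra.
set n' := n.-1.
have en : n = n'.+1 by rewrite /n' prednK.
have h1 : m ^+ n' * hnorm ip (P x0) <= hnorm ip (iter n P x0).
  by rewrite en iterSr; exact: (@iter_lb m hmz m0 n').
have h2 : m <= hnorm ip (P x0) by have := hmz x0; rewrite hx0 mulr1.
apply/eqP; rewrite eq_le h2 andbT.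
have [m00|mp] := eqVneq m 0.
  have : hnorm ip (iter n P x0) <= 0.
    by rewrite h; apply: le_trans mkn _; rewrite m00 en expr0n.
  move=> hle.
  have : iter n'.+1 P x0 = 0.
    rewrite -en.
    by apply: hnorm_eq0; apply/eqP; rewrite eq_le hle hnorm_ge0.
  move/iter_ker => ->; by rewrite hnorm0 m00.
have mpos : 0 < m by rewrite lt0r mp m0.
rewrite -(ler_pM2l (exprn_gt0 n' mpos)) -exprSr -en.
apply: le_trans h1 _; by rewrite h.
Qed.

End Dirs.
End Basics.

Theorem proposition2p10 (R : realType) (V : lmodType R[i]) (ip : V -> V -> R[i])
  (hH : is_hilbert ip) (P : V -> V) (hPb : is_bounded_op ip P)
  (hPpos : is_positive_op ip P) (n : nat) (hn : (0 < n)%N) :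
  (property_N ip P <-> property_N ip (op_pow P n)) /\
  (property_Nstar ip P <-> property_Nstar ip (op_pow P n)).
Proof.
case: hH => hip _; case: hPb => hPl hPbnd.
rewrite /property_N /property_Nstar /op_pow.
split; split => -[x0 [hx0 h]]; exists x0; split => //.
- exact: (@dirA _ _ _ hip P hPl hPpos hPbnd n x0 hx0 h).
- exact: (@dirB _ _ _ hip P hPl hPpos hPbnd n x0 hx0 hn h).
- exact: (@dirC _ _ _ hip P hPl hPpos hPbnd n x0 hx0 h).
- exact: (@dirD _ _ _ hip P hPl hPpos hPbnd n x0 hx0 hn h).
Qed.
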